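(* Let $I$ be an instance and let $\sigma$ and $\sigma'$ be two maximal $I$-feasible sequences (i.e. $I$-feasible sequences admitting no $I$-feasible one-event extension). Then $\sigma$ and $\sigma'$ contain the same set of events.
   Context: An instance $I$ consists of finite disjoint sets $R$ (residents) and $H$ (hospitals), a positive integer quota $q_h$ for each $h\in H$, for each $r\in R$ a preference list of $r$ (a sequence of distinct members of $H$, not necessarily all), and for each $h\in H$ a preference list of $h$ (a sequence of distinct members of $R$). A match is a pair $(r,h)\in R\times H$. For a set $M$ of matches, $\mathrm{res}_h M=\{r:(r,h)\in M\}$, $\mathrm{res}\,M=\{r:(r,h)\in M\text{ for some }h\}$. An event is $(r,h)^+$ (proposal) or $(r,h)^-$ (rejection). For an event sequence $\sigma$, $\mathrm{prop}(\sigma)$, $\mathrm{rej}(\sigma)$ are the sets of matches proposed/rejected in $\sigma$ and $\mathrm{tent}(\sigma)=\mathrm{prop}(\sigma)\setminus\mathrm{rej}(\sigma)$. A match $(r,h)\in M$ is ousted from $M$ in $I$ if the list of $h$ in $I$ contains at least $q_h$ residents of $\mathrm{res}_h M$ and either $r$ is not on it or $r$ is preceded on it by at least $q_h$ residents of $\mathrm{res}_h M$. $I$-feasible sequences are defined inductively: the empty sequence is $I$-feasible; if $\sigma$ is $I$-feasible then $\sigma+(r,h)^+$ is $I$-feasible if $r\notin\mathrm{res}\,\mathrm{tent}(\sigma)$, $(r,h)\notin\mathrm{prop}(\sigma)$, $h$ is on the list of $r$ in $I$ and $(r,h')\in\mathrm{rej}(\sigma)$ for every $h'$ preceding $h$ on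 it; and $\sigma+(r,h)^-$ is $I$-feasible if $(r,h)$ is ousted from $\mathrm{prop}(\sigma)$ in $I$ and $(r,h)\notin\mathrm{rej}(\sigma)$. *)

(* Defs.v *)
From mathcomp Require Import all_boot.
Set Implicit Arguments. Unset Strict Implicit. Unset Printing Implicit Defensive.

Record instance (R H : finType) := Instance {
  quota : H -> nat;
  quota_pos : forall h, 0 < quota h;
  rpref : R -> seq H;
  rpref_uniq : forall r, uniq (rpref r);
  hpref : H -> seq R;
  hpref_uniq : forall h, uniq (hpref h)
}.

Section Defs.
Variables (R H : finType).

(* A match is a pair (r,h). An event is (true, m) = proposal m^+,
   (false, m) = rejection m^-. *)
Definition match_t := (R * H)%type.
Definition event := (bool * match_t)%type.
Definition propE (m : match_t) : event := (true, m).
Definition rejE (m : match_t) : event := (false, m).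

Definition prop (s : seq event) : {set match_t} := [set m | propE m \in s].
Definition rej (s : seq event) : {set match_t} := [set m | rejE m \in s].
Definition tent (s : seq event) : {set match_t} := prop s :\: rej s.

Definition res_at (M : {set match_t}) (h : H) : {set R} := [set r | (r, h) \in M].
Definition res (M : {set match_t}) : {set R} := [set r | [exists h, (r, h) \in M]].

Definition ousted (I : instance R H) (M : {set match_t}) (r : R) (h : H) : bool :=
  let L := hpref I h in
  let c := fun s : seq R => count (fun r' => r' \in res_at M h) s in
  [&& (r, h) \in M, quota I h <= c L &
      (r \notin L) || (quota I h <= c (take (index r L) L))].

Inductive feasible (I : instance R H) : seq event -> Prop :=
| feasible_nil : feasible I [::]
| feasible_prop (s : seq event) (r : R) (h : H) :
    feasible I s ->
    r \notin res (tent s) ->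
    (r, h) \notin prop s ->
    h \in rpref I r ->
    (forall h', h' \in take (index h (rpref I r)) (rpref I r) -> (r, h') \in rej s) ->
    feasible I (rcons s (propE (r, h)))
| feasible_rej (s : seq event) (r : R) (h : H) :
    feasible I s ->
    ousted I (prop s) r h ->
    (r, h) \notin rej s ->
    feasible I (rcons s (rejE (r, h))).

Definition maximal_feasible (I : instance R H) (s : seq event) : Prop :=
  feasible I s /\ forall e : event, ~ feasible I (rcons s e).

End Defs.

(* Main.v *)
Require Import Defs.
From mathcomp Require Import all_boot.

Section P.
Variables (R H : finType) (I : instance R H).

Lemma prop_rcons (s : seq (event R H)) e m :
  (m \in prop (rcons s e)) = (propE m == e) || (m \in prop s).
Proof. by rewrite !inE mem_rcons inE. Qed.

Lemma rej_rcons (s : seq (event R H)) e m :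
  (m \in rej (rcons s e)) = (rejE m == e) || (m \in rej s).
Proof. by rewrite !inE mem_rcons inE. Qed.

Lemma feas_inv s : feasible I s ->
  (forall m, m \in rej s -> m \in prop s) /\
  (forall r h, (r, h) \in prop s -> h \in rpref I r /\
     forall h', h' \in take (index h (rpref I r)) (rpref I r) -> (r, h') \in rej s).
Proof.
elim=> [|t r h ft [IH1 IH2] nres nprop hin hpre|t r h ft [IH1 IH2] ous nrej].
- by split=> [m|r h]; rewrite inE.
- split=> [m|r' h'].
  + by rewrite rej_rcons prop_rcons /= => /IH1 ->; rewrite ?orbT.
  + rewrite prop_rcons => /orP [/eqP [-> ->]|/IH2 [H1 H2]].
      by split=> // h0 /hpre; rewrite rej_rcons => ->; rewrite ?orbT.
    by split=> // h0 /H2; rewrite rej_rcons => ->; rewrite ?orbT.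
- split=> [m|r' h'].
  + rewrite rej_rcons prop_rcons /= => /orP [/eqP [->]|/IH1 ->]; last by rewrite ?orbT.
    by case/and3P: ous => ->; rewrite ?orbT.
  + rewrite prop_rcons /= => /IH2 [H1 H2].
    by split=> // h0 /H2; rewrite rej_rcons => ->; rewrite ?orbT.
Qed.

Lemma ousted_mono (M M' : {set match_t R H}) r h :
  M \subset M' -> ousted I M r h -> ousted I M' r h.
Proof.
move=> /subsetP sub /and3P [inM q1 q2].
have sc : forall s, count (fun r' => r' \in res_at M h) s <= count (fun r' => r' \in res_at M' h) s.
  move=> s; apply: sub_count => x; rewrite !inE; exact: sub.
apply/and3P; split; first exact: sub.
  exact: leq_trans q1 (sc _).
case/orP: q2 => [->//|q2]; apply/orP; right; exact: leq_trans q2 (sc _).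
Qed.

Lemma sub_max s s' : feasible I s -> maximal_feasible I s' -> {subset s <= s'}.
Proof.
move=> fs [fs' mx]; have [inv1 inv2] := @feas_inv s' fs'.
elim: fs => [|t r h ft IH nres nprop hin hpre|t r h ft IH ous nrej] //.
- move=> x; rewrite mem_rcons inE => /orP [/eqP ->|/IH //].
  apply/negPn/negP => notin; apply: (mx (propE (r, h))).
  have pre' : forall h', h' \in take (index h (rpref I r)) (rpref I r) -> (r, h') \in rej s'.
    by move=> h' /hpre; rewrite !inE => /IH.
  apply: feasible_prop => //; last by rewrite inE.
  apply/negP; rewrite inE => /existsP [h'']; rewrite inE => /andP [nrj pr].
  have [hin'' pre''] := inv2 _ _ pr.
  have [lt|gt|eq] := ltngtP (index h'' (rpref I r)) (index h (rpref I r)).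
  + by move: nrj; rewrite pre' // in_take.
  + have := pre'' h; rewrite in_take // => /(_ gt) /inv1.
    by rewrite inE (negbTE notin).
  + have : h'' = h.
      by rewrite -(nth_index h hin'') eq nth_index.
    by move=> E; move: pr; rewrite E inE (negbTE notin).
- move=> x; rewrite mem_rcons inE => /orP [/eqP ->|/IH //].
  apply/negPn/negP => notin; apply: (mx (rejE (r, h))).
  apply: feasible_rej => //; last by rewrite inE.
  apply: ousted_mono ous; apply/subsetP => m; rewrite !inE; exact: IH.
Qed.

End P.

Theorem proposition2 (R H : finType) (I : instance R H) (s s' : seq (event R H)) :
  maximal_feasible I s -> maximal_feasible I s' ->
  forall e : event R H, (e \in s) = (e \in s').
Proof.
move=> ms ms' e; apply/idP/idP.
- exact: sub_max (proj1 ms) ms' e.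
- exact: sub_max (proj1 ms') ms e.
Qed.
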